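(* Let $R$ be a finite local ring with maximal ideal $M$, and let $\chi,\eta$ be multiplicative characters of $R$. (i) Assume $\eta$ is primitive. If $\chi$ is neither trivial nor primitive, then $J(\chi,\eta)=0$; if $\chi$ is trivial and $R$ is not a field, then $J(\chi,\eta)=0$ as well. (ii) Assume $\chi$ and $\eta$ are primitive. If $R$ is not a field and $\chi\eta$ is neither trivial nor primitive, then $J(\chi,\eta)=0$. (iii) Assume $R$ admits a primitive additive character $\psi$ (with respect to which Gauss sums are taken). If $\chi\eta$ is primitive, then $G(\chi)G(\eta)=J(\chi,\eta)\,G(\chi\eta)$.
   Context: All rings are finite and commutative with identity; $R^\times$ is the unit group. A multiplicative character is a homomorphism $R^\times\to\mathbb{C}^*$; its conductor is $R$ if it is trivial, and otherwise the largest ideal $I\subseteq M$ such that it is identically $1$ on $1+I$; it is primitive if its conductor is $(0)$. An additive character $(R,+)\to\mathbb{C}^*$ is primitive if the only ideal on which it is identically $1$ is $(0)$. Gauss sum $G(\chi)=\sum_{u\in R^\times}\psi(u)\chi(u)$; Jacobi sum $J(\chi,\eta)=\sum_{u,v\in R^\times,\,u+v=1}\chi(u)\eta(v)$. *)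

(* Defs.v *)
(* Characters take values in algC (algebraic complex numbers);
   every character of a finite group is valued in roots of unity, so this is
   no loss compared with C^*. *)
From HB Require Import structures.
From mathcomp Require Import all_boot all_order all_algebra all_fingroup all_field.
Set Implicit Arguments. Unset Strict Implicit. Unset Printing Implicit Defensive.
Import GRing.Theory Num.Theory.
Local Open Scope ring_scope.

Section Defs.
Variable R : finComUnitRingType.

Definition is_ideal (I : {set R}) : Prop :=
  0 \in I /\ (forall x y, x \in I -> y \in I -> x + y \in I) /\
  (forall r x, x \in I -> r * x \in I).

Definition is_maximal_ideal (M : {set R}) : Prop :=
  is_ideal M /\ M != setT /\
  (forall I, is_ideal I -> M \subset I -> I = M \/ I = setT).

Definition local_with (M : {set R}) : Prop :=
  is_maximal_ideal M /\ (forall N, is_maximal_ideal N -> N = M).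

Definition is_field_ring : Prop := forall x : R, x != 0 -> x \is a GRing.unit.

Definition mult_char (chi : {unit R} -> algC) : Prop :=
  (forall u, chi u != 0) /\ (forall u v, chi (u * v)%g = chi u * chi v).

Definition trivial_char (chi : {unit R} -> algC) : Prop := forall u, chi u = 1.

Definition trivial_on (chi : {unit R} -> algC) (I : {set R}) : Prop :=
  forall x u, x \in I -> val u = 1 + x -> chi u = 1.

(* conductor is (0): chi nontrivial and the largest ideal I <= M with chi = 1
   on 1 + I is (0), i.e. every such ideal is (0). *)
Definition primitive_char (M : {set R}) (chi : {unit R} -> algC) : Prop :=
  ~ trivial_char chi /\
  (forall I, is_ideal I -> I \subset M -> trivial_on chi I -> I = [set 0]).

Definition add_char (psi : R -> algC) : Prop :=
  (forall x, psi x != 0) /\ (forall x y, psi (x + y) = psi x * psi y).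

Definition primitive_add_char (psi : R -> algC) : Prop :=
  forall I, is_ideal I -> (forall x, x \in I -> psi x = 1) -> I = [set 0].

Definition char_mul (chi eta : {unit R} -> algC) : {unit R} -> algC :=
  fun u => chi u * eta u.

Definition gauss_sum (psi : R -> algC) (chi : {unit R} -> algC) : algC :=
  \sum_(u : {unit R}) psi (val u) * chi u.

Definition jacobi_sum (chi eta : {unit R} -> algC) : algC :=
  \sum_(u : {unit R}) \sum_(v : {unit R} | val u + val v == 1) chi u * eta v.

End Defs.

(* Main.v *)
Require Import Defs.
From HB Require Import structures.
From mathcomp Require Import all_boot all_order all_algebra all_fingroup all_field.
From Stdlib Require Import Classical.
From mathcomp Require Import ring.
Set Implicit Arguments. Unset Strict Implicit. Unset Printing Implicit Defensive.
Import GRing.Theory Num.Theory.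
Local Open Scope ring_scope.

Section Chars.
Variable R : finComUnitRingType.

Definition chiE (chi : {unit R} -> algC) (x : R) : algC :=
  if insub x is Some u then chi u else 0.

Lemma chiE_val chi (u : {unit R}) : chiE chi (val u) = chi u.
Proof. by rewrite /chiE valK. Qed.

Lemma chiE_out chi x : x \isn't a GRing.unit -> chiE chi x = 0.
Proof. by move=> xn; rewrite /chiE insubF //; apply/negbTE. Qed.

Lemma unitM2 (x y : R) : (x * y \is a GRing.unit) = (x \is a GRing.unit) && (y \is a GRing.unit).
Proof. exact: unitrM. Qed.

Lemma chiE_mul chi x y : mult_char chi -> chiE chi (x * y) = chiE chi x * chiE chi y.
Proof.
move=> [_ Hm].
have [xu|xn] := boolP (x \is a GRing.unit); last first.
  by rewrite (chiE_out _ xn) mul0r chiE_out // unitM2 negb_and xn.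
have [yu|yn] := boolP (y \is a GRing.unit); last first.
  by rewrite (chiE_out _ yn) mulr0 chiE_out // unitM2 negb_and yn orbT.
have -> : x = val (insubd (1%g : {unit R}) x) by rewrite insubdK.
have -> : y = val (insubd (1%g : {unit R}) y) by rewrite insubdK.
by rewrite -FinRing.val_unitM !chiE_val Hm.
Qed.

Lemma chiE_charmul chi eta x : chiE (char_mul chi eta) x = chiE chi x * chiE eta x.
Proof.
have [xu|xn] := boolP (x \is a GRing.unit); last by rewrite !chiE_out ?mul0r.
have -> : x = val (insubd (1%g : {unit R}) x) by rewrite insubdK.
by rewrite !chiE_val.
Qed.

Lemma sum_units (f : R -> algC) : (forall x, x \isn't a GRing.unit -> f x = 0) ->
  \sum_(x : R) f x = \sum_(u : {unit R}) f (val u).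
Proof.
move=> Hf; rewrite (bigID (fun x => x \is a GRing.unit)) /=.
rewrite [X in _ + X]big1 ?addr0; last by move=> x; apply: Hf.
rewrite (reindex_omap (val : {unit R} -> R) insub); last first.
  by move=> i iu; rewrite insubT.
apply: eq_bigl => u /=; rewrite (valP u) valK /= eqxx //.
Qed.

Lemma sum_mulr (c : R) (F : R -> algC) : c \is a GRing.unit ->
  \sum_(x : R) F (x * c) = \sum_(x : R) F x.
Proof.
move=> cu; rewrite [RHS](reindex_inj (mulIr cu)) //.
Qed.

Lemma sum_unit_zero chi : mult_char chi -> ~ trivial_char chi ->
  \sum_(x : R) chiE chi x = 0.
Proof.
move=> Hc Hn; have [u Hu] : exists u, chi u != 1.
  apply: NNPP => H; apply: Hn => u; apply/eqP; apply: NNPP => H'; apply: H; exists u; exact/negP.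
have E : \sum_(x : R) chiE chi x = chi u * \sum_(x : R) chiE chi x.
  rewrite mulr_sumr -[LHS](sum_mulr (chiE chi) (valP u)); apply: eq_bigr => x _.
  by rewrite chiE_mul // chiE_val mulrC.
apply/eqP; move: E; rewrite -{1}(mul1r (\sum_x _)) => /eqP.
rewrite -subr_eq0 -mulrBl mulf_eq0 subr_eq0 eq_sym (negbTE Hu) /= => /eqP ->; done.
Qed.

Lemma jacobiE chi eta : jacobi_sum chi eta = \sum_(x : R) chiE chi (1 - x) * chiE eta x.
Proof.
rewrite /jacobi_sum; under eq_bigr => u _ do rewrite big_mkcond /=.
rewrite exchange_big /= (@sum_units (fun x => chiE chi (1 - x) * chiE eta x)); last first.
  by move=> x xn; rewrite (chiE_out _ xn) mulr0.
apply: eq_bigr => v _; rewrite chiE_val.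
have -> : \sum_u (if val u + val v == 1 then chi u * eta v else 0) =
  \sum_(x : R) (if x == 1 - val v then chiE chi x * eta v else 0).
  rewrite (@sum_units (fun x => if x == 1 - val v then chiE chi x * eta v else 0)); last first.
    by move=> x xn; case: ifP => // _; rewrite (chiE_out _ xn) mul0r.
  apply: eq_bigr => u _; rewrite chiE_val.
  by rewrite [_ == 1 - _]eq_sym subr_eq eq_sym.
by rewrite (bigD1 (1 - val v)) //= eqxx big1 ?addr0 // => x /negbTE ->.
Qed.

Lemma gaussE psi chi : gauss_sum psi chi = \sum_(x : R) psi x * chiE chi x.
Proof.
rewrite (@sum_units (fun x => psi x * chiE chi x)); last by move=> x xn; rewrite (chiE_out _ xn) mulr0.
by apply: eq_bigr => u _; rewrite chiE_val.
Qed.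

End Chars.
Section Local.
Variable R : finComUnitRingType.
Variable M : {set R}.
Hypothesis HM : local_with M.

Lemma ideal_opp (I : {set R}) x : is_ideal I -> x \in I -> - x \in I.
Proof. by move=> [_ [_ Hm]] xI; rewrite -mulN1r Hm. Qed.

Lemma ideal_sub (I : {set R}) x y : is_ideal I -> x \in I -> y \in I -> x - y \in I.
Proof. move=> HI xI yI; have [_ [Ha _]] := HI; exact/Ha/ideal_opp. Qed.

Lemma ideal_mulr (I : {set R}) x r : is_ideal I -> x \in I -> x * r \in I.
Proof. by move=> [_ [_ Hm]] xI; rewrite mulrC Hm. Qed.

Lemma exists_max (J : {set R}) : is_ideal J -> J != setT ->
  exists N, is_maximal_ideal N /\ J \subset N.
Proof.
move=> HJ; move: {2}#|~: J| (leqnn #|~: J|) => n.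
elim: n J HJ => [|n IH] J HJ Hle JT.
  exfalso; move: Hle; rewrite leqn0 cards_eq0 => /eqP/(congr1 (@setC _)).
  by rewrite setCK setC0 => JT'; move/negP: JT; apply; apply/eqP.
case: (classic (is_maximal_ideal J)) => [Hm|Hn]; first by exists J.
have : ~ (forall I, is_ideal I -> J \subset I -> I = J \/ I = setT).
  by move=> H; apply: Hn; split; [|split].
move/not_all_ex_not => [I H1].
have [HI H2] := imply_to_and _ _ H1.
have [JI H3] := imply_to_and _ _ H2.
have [IJ IT] := not_or_and _ _ H3.
have IT' : I != setT by apply/eqP.
have [N [HN IN]] : exists N, is_maximal_ideal N /\ I \subset N.
  apply: IH => //.
  have : (#|~: I| < #|~: J|)%N.
    apply: proper_card; rewrite properEneq setCS JI andbT.
    by apply/negP => /eqP /(congr1 (@setC _)); rewrite !setCK => E; apply: IJ.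
  move=> H; rewrite -ltnS; exact: leq_trans H Hle.
by exists N; split => //; apply: subset_trans JI IN.
Qed.

Lemma M_ideal : is_ideal M. Proof. by case: HM => [[]]. Qed.

Lemma one_notin_M : 1 \notin M.
Proof.
have [[HI [MT _]] _] := HM; apply/negP => H1; move/negP: MT; apply.
by apply/eqP/setP => x; rewrite inE -(mulr1 x); have [_ [_ Hm]] := HI; apply: Hm.
Qed.

Lemma unitM x : (x \is a GRing.unit) = (x \notin M).
Proof.
apply/idP/idP.
  move=> xu; apply/negP => xM; move/negP: one_notin_M; apply.
  rewrite -(mulVr xu); have [_ [_ Hm]] := M_ideal; exact: Hm.
move=> xM; apply/negPn/negP => xnu; move/negP: xM; apply.
pose J := [set x * r | r : R].
have HJ : is_ideal J.
  split; first by apply/imsetP; exists 0; rewrite ?mulr0.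
  split.
    move=> a b /imsetP[r _ ->] /imsetP[s _ ->]; apply/imsetP; exists (r + s) => //.
    by rewrite mulrDr.
  move=> r a /imsetP[s _ ->]; apply/imsetP; exists (r * s) => //.
  by rewrite mulrCA.
have JT : J != setT.
  apply/negP => /eqP JT; have : (1 : R) \in J by rewrite JT inE.
  by move/imsetP => [r _ E]; move/negP: xnu; apply; apply/unitrPr; exists r.
have [N [HN JN]] := exists_max HJ JT.
have [_ Huniq] := HM; rewrite -(Huniq N HN).
by apply: (subsetP JN); apply/imsetP; exists 1; rewrite ?mulr1.
Qed.

Lemma unit1M x : x \in M -> 1 + x \is a GRing.unit.
Proof.
move=> xM; rewrite unitM; apply/negP => H; move/negP: one_notin_M; apply.
by have := ideal_sub M_ideal H xM; rewrite addrK.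
Qed.

End Local.

Section Main.
Variable R : finComUnitRingType.
Variable M : {set R}.
Hypothesis HM : local_with M.

Lemma char1 (chi : {unit R} -> algC) : mult_char chi -> chi 1%g = 1.
Proof.
move=> [Hn Hm]; have := Hm 1%g 1%g; rewrite mulg1 => /eqP.
rewrite -{1}(mulr1 (chi 1%g)) -subr_eq0 -mulrBr mulf_eq0 (negbTE (Hn _)) /=.
by rewrite subr_eq0 eq_sym => /eqP.
Qed.

Lemma L0 (g : R -> algC) (eta : {unit R} -> algC) (u : {unit R}) :
  mult_char eta -> eta u != 1 ->
  (forall x, g (1 - x * val u) = g (1 - x)) ->
  \sum_(x : R) g (1 - x) * chiE eta x = 0.
Proof.
move=> He Hu Hg.
have E : \sum_(x : R) g (1 - x) * chiE eta x = eta u * \sum_(x : R) g (1 - x) * chiE eta x.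
  rewrite mulr_sumr -[LHS](sum_mulr (fun x => g (1 - x) * chiE eta x) (valP u)).
  by apply: eq_bigr => x _; rewrite Hg chiE_mul // chiE_val mulrA mulrC.
apply/eqP; move: E; rewrite -{1}(mul1r (\sum_x _)) => /eqP.
rewrite -subr_eq0 -mulrBl mulf_eq0 subr_eq0 eq_sym (negbTE Hu) /= => /eqP ->; done.
Qed.

Lemma chiE_triv chi (I : {set R}) z : trivial_on chi I -> z \in I ->
  1 + z \is a GRing.unit -> chiE chi (1 + z) = 1.
Proof.
move=> Ht zI zu; rewrite -(insubdK (1%g : {unit R}) zu) chiE_val.
by apply: (Ht z) => //; rewrite insubdK.
Qed.

Lemma shift_inv chi (I : {set R}) y (u : {unit R}) :
  mult_char chi -> is_ideal I -> I \subset M -> trivial_on chi I ->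
  y \in I -> val u = 1 + y ->
  forall x, chiE chi (1 - x * val u) = chiE chi (1 - x).
Proof.
move=> Hc HI IM Ht yI Hu x; rewrite Hu mulrDr mulr1 opprD addrA.
have MI := M_ideal HM.
have [wu|wn] := boolP (1 - x \is a GRing.unit).
  set w := 1 - x.
  have -> : w - x * y = w * (1 + - (w^-1 * (x * y))).
    by rewrite mulrDr mulr1 mulrN mulrA mulrV // mul1r.
  have zI : - (w^-1 * (x * y)) \in I.
    apply: ideal_opp => //; have [_ [_ Hm]] := HI; apply: Hm.
    by rewrite mulrC; apply: ideal_mulr.
  rewrite chiE_mul // (chiE_triv Ht zI) ?mulr1 //.
  by apply: (unit1M HM); apply: (subsetP IM _ zI).
rewrite !chiE_out //; rewrite (unitM HM) negbK.
rewrite (unitM HM) negbK in wn; apply: ideal_sub => //.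
rewrite mulrC; apply: ideal_mulr => //; exact: (subsetP IM).
Qed.


Lemma not_prim_ideal chi : ~ trivial_char chi -> ~ primitive_char M chi ->
  exists I, [/\ is_ideal I, I \subset M, trivial_on chi I & I != [set 0]].
Proof.
move=> Hn Hp.
have : ~ (forall I, is_ideal I -> I \subset M -> trivial_on chi I -> I = [set 0]).
  by move=> H; apply: Hp.
move/not_all_ex_not => [I H1]; have [HI H2] := imply_to_and _ _ H1.
have [IM H3] := imply_to_and _ _ H2; have [Ht H4] := imply_to_and _ _ H3.
by exists I; split => //; apply/eqP.
Qed.

Lemma prim_witness eta I : primitive_char M eta -> is_ideal I -> I \subset M ->
  I != [set 0] -> exists y (u : {unit R}), [/\ y \in I, val u = 1 + y & eta u != 1].
Proof.
move=> [_ Hp] HI IM I0; apply: NNPP => H.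
have Ht : trivial_on eta I.
  move=> x u xI xu; apply/eqP; apply: NNPP => H'; apply: H.
  by exists x, u; split => //; apply/negP.
by move/eqP: I0; apply; apply: Hp.
Qed.

Lemma part_ia chi eta : mult_char chi -> mult_char eta -> primitive_char M eta ->
  ~ trivial_char chi -> ~ primitive_char M chi -> jacobi_sum chi eta = 0.
Proof.
move=> Hc He Hp Hn Hnp.
have [I [HI IM Ht I0]] := not_prim_ideal Hn Hnp.
have [y [u [yI yu Hu]]] := prim_witness Hp HI IM I0.
rewrite jacobiE; apply: (L0 He Hu).
exact: (shift_inv Hc HI IM Ht yI yu).
Qed.

Lemma part_ib chi eta : mult_char chi -> mult_char eta -> primitive_char M eta ->
  trivial_char chi -> ~ is_field_ring R -> jacobi_sum chi eta = 0.
Proof.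
move=> Hc He Hp Ht Hnf.
have MI := M_ideal HM.
have M0 : M != [set 0].
  apply/negP => /eqP M0; apply: Hnf => x x0; rewrite (unitM HM) M0 inE //.
have [y [u [yM yu Hu]]] := prim_witness Hp MI (subxx M) M0.
rewrite jacobiE.
have -> : \sum_(x : R) chiE chi (1 - x) * chiE eta x =
  \sum_(x : R) chiE eta x - \sum_(x : R) (1 - x \in M)%:R * chiE eta x.
  rewrite -sumrB; apply: eq_bigr => x _.
  suff -> : chiE chi (1 - x) = 1 - (1 - x \in M)%:R by rewrite mulrBl mul1r.
  have [w|w] := boolP (1 - x \is a GRing.unit).
    rewrite -(insubdK (1%g : {unit R}) w) chiE_val Ht insubdK //.
    by move: w; rewrite (unitM HM) => /negbTE ->; rewrite subr0.
  by rewrite chiE_out //; move: w; rewrite (unitM HM) negbK => ->; rewrite subrr.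
rewrite (L0 (g := fun z => (z \in M)%:R) He Hu); last first.
  move=> x /=; rewrite yu mulrDr mulr1 opprD addrA.
  have xyM : x * y \in M by rewrite mulrC; apply: ideal_mulr.
  have [h|h] := boolP (1 - x \in M).
    by rewrite (ideal_sub MI h xyM).
  have [h'|//] := boolP (1 - x - x * y \in M).
  exfalso; move/negP: h; apply.
  by have := (ideal_sub MI h' (ideal_opp MI xyM)); rewrite opprK subrK.
rewrite subr0 sum_unit_zero //.
by move=> Htr; have := Hu; rewrite Htr eqxx.
Qed.


Definition xi_of (chi eta : {unit R} -> algC) : {unit R} -> algC :=
  fun u => (chi u * eta u)^-1.

Lemma xi_mult chi eta : mult_char chi -> mult_char eta -> mult_char (xi_of chi eta).
Proof.
move=> [Hc Hcm] [He Hem]; split.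
  by move=> u; rewrite /xi_of invr_eq0 mulf_neq0.
by move=> u v; rewrite /xi_of Hcm Hem -invfM mulrACA.
Qed.

Lemma char_inv chi (w : {unit R}) : mult_char chi -> chi (w^-1)%g = (chi w)^-1.
Proof.
move=> Hc; have [Hn Hm] := Hc.
apply: (mulfI (Hn w)); rewrite -Hm mulgV char1 // divff //.
Qed.

Lemma xi_inv chi eta x : mult_char chi -> mult_char eta ->
  chiE chi (x^-1) * chiE eta (x^-1) = chiE (xi_of chi eta) x.
Proof.
move=> Hc He.
have [xu|xn] := boolP (x \is a GRing.unit); last by rewrite invr_out // !chiE_out ?mul0r.
rewrite -(insubdK (1%g : {unit R}) xu) -FinRing.val_unitV !chiE_val.
by rewrite !char_inv // /xi_of invfM mulrC.
Qed.

Lemma part_ii chi eta : mult_char chi -> mult_char eta ->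
  primitive_char M chi -> primitive_char M eta ->
  ~ trivial_char (char_mul chi eta) -> ~ primitive_char M (char_mul chi eta) ->
  jacobi_sum chi eta = 0.
Proof.
move=> Hc He Hpc Hpe Hn Hnp.
have [I [HI IM Ht I0]] := not_prim_ideal Hn Hnp.
have [y [u [yI yu Hu]]] := prim_witness Hpc HI IM I0.
set xi := xi_of chi eta.
have Hx : mult_char xi by apply: xi_mult.
have Htx : trivial_on xi I.
  by move=> z w zI zw; rewrite /xi /xi_of; have := Ht z w zI zw; rewrite /char_mul => ->; rewrite invr1.
rewrite jacobiE (reindex_inj invr_inj) /=.
have -> : \sum_(x : R) chiE chi (1 - x^-1) * chiE eta x^-1 =
  chiE chi (-1) * \sum_(x : R) chiE chi (1 - x) * chiE xi x.
  rewrite mulr_sumr; apply: eq_bigr => x _.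
  have [xu|xn] := boolP (x \is a GRing.unit); last first.
    by rewrite invr_out // (chiE_out eta xn) (chiE_out xi xn) !mulr0.
  have -> : 1 - x^-1 = -1 * ((1 - x) * x^-1).
    by rewrite mulN1r mulrBl mul1r mulrV // opprB.
  by rewrite !chiE_mul // -xi_inv // !mulrA.
rewrite (reindex_inj (h := fun x => 1 - x)) /=; last first.
  by move=> a b /= /addrI /oppr_inj.
under eq_bigr => x _ do rewrite opprB addrC subrK mulrC.
rewrite (L0 Hc Hu) ?mulr0 //.
exact: (shift_inv Hx HI IM Htx yI yu).
Qed.


Lemma fix0 (S c : algC) : c != 1 -> S = c * S -> S = 0.
Proof.
move=> Hc E; apply/eqP; move: E; rewrite -{1}(mul1r S) => /eqP.
by rewrite -subr_eq0 -mulrBl mulf_eq0 subr_eq0 eq_sym (negbTE Hc) /= => /eqP ->.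
Qed.

Lemma T_lemma (psi : R -> algC) th a : mult_char th -> primitive_char M th ->
  \sum_(y : R) psi (y * a) * chiE th y = chiE th (a^-1) * \sum_(y : R) psi y * chiE th y.
Proof.
move=> Ht Hp.
have [au|an] := boolP (a \is a GRing.unit).
  have aiu : a^-1 \is a GRing.unit by rewrite unitrV.
  rewrite mulr_sumr -[LHS](sum_mulr (fun y => psi (y * a) * chiE th y) aiu).
  apply: eq_bigr => y _; rewrite -mulrA mulVr // mulr1 chiE_mul //.
  by rewrite mulrA mulrC.
rewrite (invr_out an) (chiE_out _ an) mul0r.
have [->|a0] := eqVneq a 0.
  under eq_bigr => y _ do rewrite mulr0.
  by rewrite -mulr_sumr sum_unit_zero ?mulr0 //; case: Hp.
pose I := [set z : R | z * a == 0].
have HI : is_ideal I.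
  split; first by rewrite inE mul0r.
  split.
    by move=> x z; rewrite !inE mulrDl => /eqP -> /eqP ->; rewrite addr0.
  by move=> r x; rewrite !inE -mulrA => /eqP ->; rewrite mulr0.
have IM : I \subset M.
  apply/subsetP => z; rewrite inE => /eqP za; apply/negPn; rewrite -(unitM HM).
  apply/negP => zu; move/eqP: a0; apply.
  by rewrite -(mul1r a) -(mulVr zu) -mulrA za mulr0.
have I0 : I != [set 0].
  apply/negP => /eqP I0.
  have Hinj : injective (fun z : R => z * a).
    move=> z1 z2 /= /eqP; rewrite -subr_eq0 -mulrBl => /eqP H.
    have : z1 - z2 \in I by rewrite inE H.
    by rewrite I0 inE subr_eq0 => /eqP.
  have [g _ gK] := injF_bij Hinj.
  move/negP: an; apply; apply/unitrPr; exists (g 1); rewrite mulrC; exact: gK.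
have [y [u [yI yu Hu]]] := prim_witness Hp HI IM I0.
apply: (fix0 Hu).
rewrite mulr_sumr -[LHS](sum_mulr (fun y => psi (y * a) * chiE th y) (valP u)).
apply: eq_bigr => x _; rewrite chiE_mul // chiE_val yu mulrDr mulr1 mulrDl.
move: yI; rewrite inE -mulrA => /eqP ->; rewrite mulr0 addr0.
by rewrite mulrA mulrC.
Qed.


Lemma part_iii chi eta (psi : R -> algC) : mult_char chi -> mult_char eta ->
  add_char psi -> primitive_char M (char_mul chi eta) ->
  gauss_sum psi chi * gauss_sum psi eta =
    jacobi_sum chi eta * gauss_sum psi (char_mul chi eta).
Proof.
move=> Hc He [_ Hpsi] Hp.
set th := char_mul chi eta.
have Hth : mult_char th.
  have [Hc1 Hc2] := Hc; have [He1 He2] := He.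
  split; first by move=> u; rewrite /th /char_mul mulf_neq0.
  by move=> u v; rewrite /th /char_mul Hc2 He2 mulrACA.
rewrite !gaussE jacobiE.
set G := \sum_(x : R) psi x * chiE th x.
have E1 : (\sum_(x : R) psi x * chiE chi x) * (\sum_(y : R) psi y * chiE eta y) =
   \sum_(y : R) chiE th y * \sum_(w : R) psi (y * (1 + w)) * chiE chi w.
  rewrite mulr_sumr; apply: eq_bigr => y _; rewrite mulr_suml.
  have [yu|yn] := boolP (y \is a GRing.unit); last first.
    rewrite chiE_charmul (chiE_out _ yn) !mulr0 mul0r.
    by apply: big1 => x _; rewrite mulr0.
  rewrite mulr_sumr -[LHS](sum_mulr (fun x => psi x * chiE chi x * (psi y * chiE eta y)) yu).
  apply: eq_bigr => w _; rewrite chiE_charmul chiE_mul //.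
  rewrite mulrDr mulr1 mulrC Hpsi.
  rewrite [w * y]mulrC; ring.
have E2 : \sum_(y : R) chiE th y * \sum_(w : R) psi (y * (1 + w)) * chiE chi w =
   \sum_(w : R) chiE chi w * chiE th ((1 + w)^-1) * G.
  under eq_bigr => y _ do rewrite mulr_sumr.
  rewrite exchange_big /=; apply: eq_bigr => w _.
  rewrite -mulrA -(T_lemma psi (1 + w) Hth Hp) mulr_sumr.
  by apply: eq_bigr => y _; ring.
rewrite E1 E2 mulr_suml.
rewrite [in RHS](reindex_inj (h := fun w => (1 + w)^-1)) /=; last first.
  by move=> a b /= /invr_inj /addrI.
apply: eq_bigr => w _; congr (_ * G).
rewrite chiE_charmul.
have [wu|wn] := boolP (1 + w \is a GRing.unit); last first.
  by rewrite invr_out // (chiE_out eta wn) !mulr0.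
have -> : 1 - (1 + w)^-1 = w * (1 + w)^-1.
  apply: (mulIr wu); rewrite mulrBl mul1r mulVr // -mulrA mulVr // mulr1; ring.
by rewrite chiE_mul // mulrA.
Qed.

Theorem mainTheorem17_sec chi eta :
  mult_char chi -> mult_char eta ->
  (primitive_char M eta ->
     (~ trivial_char chi -> ~ primitive_char M chi -> jacobi_sum chi eta = 0) /\
     (trivial_char chi -> ~ is_field_ring R -> jacobi_sum chi eta = 0)) /\
  (primitive_char M chi -> primitive_char M eta -> ~ is_field_ring R ->
     ~ trivial_char (char_mul chi eta) -> ~ primitive_char M (char_mul chi eta) ->
     jacobi_sum chi eta = 0) /\
  (forall psi : R -> algC, add_char psi -> primitive_add_char psi ->
     primitive_char M (char_mul chi eta) ->
     gauss_sum psi chi * gauss_sum psi eta =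
       jacobi_sum chi eta * gauss_sum psi (char_mul chi eta)).
Proof.
move=> Hc He; split; [|split].
- move=> Hp; split; first exact: part_ia.
  exact: part_ib.
- by move=> Hpc Hpe _; apply: part_ii.
- by move=> psi Ha _; apply: part_iii.
Qed.

End Main.

Theorem mainTheorem17 (R : finComUnitRingType) (M : {set R})
  (chi eta : {unit R} -> algC) :
  local_with M -> mult_char chi -> mult_char eta ->
  (* (i) *)
  (primitive_char M eta ->
     (~ trivial_char chi -> ~ primitive_char M chi -> jacobi_sum chi eta = 0) /\
     (trivial_char chi -> ~ is_field_ring R -> jacobi_sum chi eta = 0)) /\
  (* (ii) *)
  (primitive_char M chi -> primitive_char M eta -> ~ is_field_ring R ->
     ~ trivial_char (char_mul chi eta) -> ~ primitive_char M (char_mul chi eta) ->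
     jacobi_sum chi eta = 0) /\
  (* (iii) *)
  (forall psi : R -> algC, add_char psi -> primitive_add_char psi ->
     primitive_char M (char_mul chi eta) ->
     gauss_sum psi chi * gauss_sum psi eta =
       jacobi_sum chi eta * gauss_sum psi (char_mul chi eta)).
Proof. move=> HM; exact: mainTheorem17_sec. Qed.
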